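(* Let $D\ge 1$, let $n_1,\dots,n_D$ and $l_1,\dots,l_D$ be positive integers with $n_d\ge l_d$ for all $d$, and let $\mathcal{M}\subseteq\mathbb{R}^{l_1\times\dots\times l_D}$ be a Tucker core structure. Then the set $$\mathcal{M}^{n_1,\dots,n_D}:=\{(U_1,\dots,U_D)\cdot\mathcal{C}\;:\;\mathcal{C}\in\mathcal{M},\ U_d\in\mathbb{R}^{n_d\times l_d}_\star\ (d=1,\dots,D)\}$$ of all tensors admitting an $\mathcal{M}$-structured Tucker decomposition is a smooth embedded submanifold of $\mathbb{R}^{n_1\times\dots\times n_D}$.
   Context: $\mathbb{R}^{n\times l}_\star$ ($n\ge l$) denotes the manifold of real $n\times l$ matrices of rank $l$. For matrices $U_d\in\mathbb{R}^{n_d\times l_d}$ and $\mathcal{C}=(c_{i_1\dots i_D})\in\mathbb{R}^{l_1\times\dots\times l_D}$, the multilinear multiplication is $(U_1,\dots,U_D)\cdot\mathcal{C}=(U_1\otimes\dots\otimes U_D)\mathcal{C}:=\sum_{i_1,\dots,i_D}c_{i_1\dots i_D}\,(U_1e_{i_1})\otimes\dots\otimes(U_De_{i_D})$. A Tucker core structure is a smooth submanifold $\mathcal{M}\subseteq\mathbb{R}^{l_1\times\dots\times l_D}$ such that (1) every $\mathcal{C}\in\mathcal{M}$ has multilinear rank $(l_1,\dots,l_D)$ (i.e. the $d$-th unfolding of $\mathcal{C}$ has rank $l_d$ for every $d$), and (2) $(A_1,\dots,A_D)\cdot\mathcal{C}\in\mathcal{M}$ for all $\mathcal{C}\in\mathcal{M}$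 and all $A_d\in\mathrm{GL}(l_d)$. *)

(* Defs.v *)
From mathcomp Require Import all_boot all_algebra.
From mathcomp Require Import all_classical all_reals all_analysis.
Import numFieldNormedType.Exports.
Set Implicit Arguments. Unset Strict Implicit. Unset Printing Implicit Defensive.
Local Open Scope ring_scope.
Local Open Scope classical_set_scope.

Section Defs.
Variable R : realType.

Definition pdiff (N m : nat) (s : seq 'I_N) (f : 'rV[R]_N -> 'rV[R]_m)
  : 'rV[R]_N -> 'rV[R]_m :=
  foldr (fun i g => fun x => 'D_('e_i) g x) f s.

Definition smooth_on (N m : nat) (U : set 'rV[R]_N)
  (f : 'rV[R]_N -> 'rV[R]_m) : Prop :=
  forall (s : seq 'I_N) (x : 'rV[R]_N), U x ->
    {for x, continuous (pdiff s f)} /\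
    (forall i : 'I_N, derivable (pdiff s f) x 'e_i).

(* Jacobian (transposed convention: row i = partial derivative along e_i) *)
Definition jacobian (N m : nat) (f : 'rV[R]_N -> 'rV[R]_m) (x : 'rV[R]_N)
  : 'M[R]_(N, m) :=
  \matrix_(i < N, j < m) ('D_('e_i) f x) ord0 j.

(* S is a smooth embedded submanifold of R^N: locally around each of its
   points it is the zero set of a smooth submersion (local defining
   function). The (co)dimension c may depend on the point. *)
Definition is_submanifold (N : nat) (S : set 'rV[R]_N) : Prop :=
  forall p, S p ->
    exists (c : nat) (U : set 'rV[R]_N) (F : 'rV[R]_N -> 'rV[R]_c),
      [/\ open U, U p, smooth_on U F,
          (forall x, U x -> \rank (jacobian F x) = c) &
          (forall x, U x -> (S x <-> F x = 0))].

Definition idx (D : nat) (l : 'I_D -> nat) : finType :=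
  {dffun forall d : 'I_D, 'I_(l d)}.

Definition tensor (D : nat) (l : 'I_D -> nat) := idx l -> R.

(* identification of R^{l_1 x ... x l_D} with R^N, N = #|idx l| *)
Definition is_submanifold_t (D : nat) (l : 'I_D -> nat)
  (S : set (tensor l)) : Prop :=
  is_submanifold [set v : 'rV[R]_#|idx l| |
                   S (fun k : idx l => v ord0 (enum_rank k))].

Definition upd (D : nat) (l : 'I_D -> nat) (k : idx l) (d : 'I_D)
  (i : 'I_(l d)) : idx l :=
  [ffun e => @dfwith _ (fun e => 'I_(l e)) (fun e => k e) d i e].

(* d-th unfolding: columns are all the mode-d fibers of C (each fiber
   repeated l_d times, which does not change the rank) *)
Definition unfolding (D : nat) (l : 'I_D -> nat) (C : tensor l) (d : 'I_D)
  : 'M[R]_(l d, #|idx l|) :=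
  \matrix_(i < l d, j < #|idx l|) C (upd (enum_val j) i).

Definition has_mlrank (D : nat) (l : 'I_D -> nat) (C : tensor l) : Prop :=
  forall d : 'I_D, \rank (unfolding C d) = l d.

Definition mlmul (D : nat) (n l : 'I_D -> nat)
  (U : forall d : 'I_D, 'M[R]_(n d, l d)) (C : tensor l) : tensor n :=
  fun j : idx n => \sum_(i : idx l) C i * \prod_(d < D) U d (j d) (i d).

Definition tucker_core_structure (D : nat) (l : 'I_D -> nat)
  (M : set (tensor l)) : Prop :=
  [/\ is_submanifold_t M,
      (forall C, M C -> has_mlrank C) &
      (forall (A : forall d : 'I_D, 'M[R]_(l d)) C,
          (forall d, A d \in unitmx) -> M C -> M (mlmul A C))].

Definition tucker_set (D : nat) (n l : 'I_D -> nat) (M : set (tensor l))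
  : set (tensor n) :=
  [set T | exists (C : tensor l) (U : forall d : 'I_D, 'M[R]_(n d, l d)),
             [/\ M C, (forall d, \rank (U d) = l d) & T = mlmul U C]].

End Defs.

(* Main.v *)
Require Import Defs.
From mathcomp Require Import all_boot all_algebra.
From mathcomp Require Import all_classical all_reals all_analysis.
Local Open Scope ring_scope.

Import mathcomp.order.order.Order.TTheory GRing.Theory Num.Theory.
Import numFieldNormedType.Exports.
Set Implicit Arguments. Unset Strict Implicit. Unset Printing Implicit Defensive.

Section Smooth.
Local Open Scope classical_set_scope.
Context {R : realType} {N : nat}.
Implicit Types (W : set 'rV[R]_N) (f g : 'rV[R]_N -> R).

Definition Dp (i : 'I_N) f : 'rV[R]_N -> R := fun x => 'D_('e_i) f x.

Fixpoint Sk W (k : nat) f : Prop :=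
  (forall x, W x -> {for x, continuous f}) /\
  match k with 0 => True | k'.+1 => forall i : 'I_N,
     (forall x, W x -> derivable f x 'e_i) /\ Sk W k' (Dp i f) end.

Definition Sm W f := forall k, Sk W k f.

Lemma Sk_cont W k f : Sk W k f -> forall x, W x -> {for x, continuous f}.
Proof. by case: k => [[]|k []]. Qed.

Lemma Sk_S W k f : Sk W k.+1 f -> Sk W k f.
Proof.
elim: k f => [|k IH] f /= [c H]; first by split.
split=> // i; have [d H'] := H i; split=> //; exact: IH.
Qed.

Lemma Sk_der W k f i : Sk W k.+1 f -> Sk W k (Dp i f).
Proof. by move=> [_ H]; case: (H i). Qed.

Lemma Sk_derivable W k f i x : Sk W k.+1 f -> W x -> derivable f x 'e_i.
Proof. by move=> [_ H] Wx; case: (H i) => H1 _; exact: H1. Qed.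

Lemma Sk_subset W W' k f : W' `<=` W -> Sk W k f -> Sk W' k f.
Proof.
move=> sub; elim: k f => [|k IH] f /= [c H]; split => //.
- by move=> x /sub; exact: c.
- by move=> x /sub; exact: c.
move=> i; have [d H'] := H i; split; last exact: IH.
by move=> x /sub; exact: d.
Qed.

Lemma open_near W x : open W -> W x -> \forall y \near x, W y.
Proof. by rewrite openE => oW Wx; exact: oW. Qed.

Lemma cont_near {T U : topologicalType} (f g : T -> U) x :
  {near x, f =1 g} -> {for x, continuous f} -> {for x, continuous g}.
Proof.
move=> nfg; rewrite /prop_for /continuous_at => cf.
rewrite -(nbhs_singleton nfg); exact: cvg_trans (near_eq_cvg nfg) cf.
Qed.

Lemma Sk_loc W k f g : open W -> (forall x, W x -> f x = g x) -> Sk W k f -> Sk W k g.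
Proof.
move=> oW; elim: k f g => [|k IH] f g fg /= [c H].
  split=> // x Wx.
  have nfg : {near x, f =1 g}.
    by near=> y; apply: fg; near: y; exact: open_near.
  exact: cont_near nfg (c x Wx).
split.
  move=> x Wx.
  have nfg : {near x, f =1 g}.
    by near=> y; apply: fg; near: y; exact: open_near.
  exact: cont_near nfg (c x Wx).
move=> i; have [d H'] := H i; split.
  move=> x Wx; apply: near_eq_derivable (d x Wx).
  by near=> y; apply: fg; near: y; exact: open_near.
apply: IH H' => x Wx; rewrite /Dp; apply: near_eq_derive.
by near=> y; apply: fg; near: y; exact: open_near.
Unshelve. all: by end_near.
Qed.


Lemma derive_lin f x v (c : R) :
  (forall h : R, f (h *: v + x) = f x + h * c) -> derivable f x v /\ 'D_v f x = c.
Proof.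
move=> E.
have nE : \forall h \near (0 : R)^' , h^-1 *: ((f \o shift x) (h *: v) - f x) = c.
  near=> h; rewrite /= E addrC addKr /GRing.scale /= mulKf //.
  by near: h; exact: nbhs_dnbhs_neq.
split; first exact: (is_cvg_near_cst c nE).
rewrite /derive; apply/lim_near_cst => //=.
Unshelve. all: by end_near.
Qed.

Lemma Sk_cst W k (c : R) : Sk W k (fun _ => c).
Proof.
elim: k c => [|k IH] c /=; split => //; try by move=> x _; exact: cst_continuous.
move=> i; split; first by move=> x _; exact: derivable_cst.
have -> : Dp i (fun _ => c) = (fun _ => 0).
  by apply: funext => x; rewrite /Dp; exact: derive_cst.
exact: IH.
Qed.

Lemma Sk_coord W k (j : 'I_N) : Sk W k (fun x => x ord0 j).
Proof.
case: k => [|k] /=; split => //; try by move=> x _; exact: coord_continuous.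
move=> i.
have E (x : 'rV[R]_N) : forall h : R, (h *: 'e_i + x) ord0 j = x ord0 j + h * ('e_i : 'rV[R]_N) ord0 j.
  by move=> h; rewrite !mxE addrC.
split; first by move=> x _; exact: (derive_lin (E x)).1.
have -> : Dp i (fun x => x ord0 j) = (fun _ => ('e_i : 'rV[R]_N) ord0 j).
  by apply: funext => x; rewrite /Dp; exact: (derive_lin (E x)).2.
exact: Sk_cst.
Qed.

Lemma Sk_add W k f g : open W -> Sk W k f -> Sk W k g -> Sk W k (fun x => f x + g x).
Proof.
move=> oW; elim: k f g => [|k IH] f g /= [cf Hf] [cg Hg].
  by split => // x Wx; exact: cvgD (cf x Wx) (cg x Wx).
split; first by move=> x Wx; exact: cvgD (cf x Wx) (cg x Wx).
move=> i; have [df Hf'] := Hf i; have [dg Hg'] := Hg i; split.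
  by move=> x Wx; exact: derivableD (df x Wx) (dg x Wx).
apply: (Sk_loc (f := fun x => Dp i f x + Dp i g x)) => //; last exact: IH.
by move=> x Wx; rewrite /Dp (deriveD (df x Wx) (dg x Wx)).
Qed.

Lemma Sk_mul W k f g : open W -> Sk W k f -> Sk W k g -> Sk W k (fun x => f x * g x).
Proof.
move=> oW; elim: k f g => [|k IH] f g /= [cf Hf] [cg Hg].
  by split => // x Wx; exact: cvgM (cf x Wx) (cg x Wx).
split; first by move=> x Wx; exact: cvgM (cf x Wx) (cg x Wx).
move=> i; have [df Hf'] := Hf i; have [dg Hg'] := Hg i; split.
  by move=> x Wx; exact: derivableM (df x Wx) (dg x Wx).
apply: (Sk_loc (f := fun x => f x * Dp i g x + g x * Dp i f x)) => //.
  by move=> x Wx; rewrite /Dp (deriveM (df x Wx) (dg x Wx)).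
apply: Sk_add => //; apply: IH => //; apply: Sk_S; split => //.
Qed.

Lemma Sk_opp W k f : open W -> Sk W k f -> Sk W k (fun x => - f x).
Proof.
move=> oW Hf; have -> : (fun x => - f x) = (fun x => (-1) * f x).
  by apply: funext => x; rewrite mulN1r.
exact: Sk_mul (Sk_cst _ _ _) Hf.
Qed.

Lemma Sk_inv W k f : open W -> (forall x, W x -> f x != 0) -> Sk W k f ->
  Sk W k (fun x => (f x)^-1).
Proof.
move=> oW nz; elim: k f nz => [|k IH] f nz /= [cf Hf].
  by split => // x Wx; exact: cvgV (nz x Wx) (cf x Wx).
split; first by move=> x Wx; exact: cvgV (nz x Wx) (cf x Wx).
move=> i; have [df Hf'] := Hf i; split.
  by move=> x Wx; exact: derivableV (nz x Wx) (df x Wx).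
apply: (Sk_loc (f := fun x => - ((f x)^-1 * (f x)^-1) * Dp i f x)) => //.
  move=> x Wx; rewrite /Dp (deriveV (nz x Wx) (df x Wx)).
  by rewrite /GRing.scale /= -invfM -expr2.
have Sf : Sk W k f by apply: Sk_S; split.
apply: Sk_mul => //; apply: Sk_opp => //; apply: Sk_mul => //; exact: IH.
Qed.

Lemma Sk_sum W k (I : Type) (r : seq I) (P : pred I) (F : I -> 'rV[R]_N -> R) :
  open W -> (forall i, P i -> Sk W k (F i)) -> Sk W k (fun x => \sum_(i <- r | P i) F i x).
Proof.
move=> oW HF; elim: r => [|a r IH].
  have -> : (fun x => \sum_(i <- [::] | P i) F i x) = (fun _ => 0).
    by apply: funext => x; rewrite big_nil.
  exact: Sk_cst.
case Pa : (P a).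
  have -> : (fun x => \sum_(i <- a :: r | P i) F i x) =
            (fun x => F a x + \sum_(i <- r | P i) F i x).
    by apply: funext => x; rewrite big_cons Pa.
  exact: Sk_add (HF a Pa) IH.
have -> : (fun x => \sum_(i <- a :: r | P i) F i x) = (fun x => \sum_(i <- r | P i) F i x).
  by apply: funext => x; rewrite big_cons Pa.
exact: IH.
Qed.

Lemma Sk_prod W k (I : Type) (r : seq I) (P : pred I) (F : I -> 'rV[R]_N -> R) :
  open W -> (forall i, P i -> Sk W k (F i)) -> Sk W k (fun x => \prod_(i <- r | P i) F i x).
Proof.
move=> oW HF; elim: r => [|a r IH].
  have -> : (fun x => \prod_(i <- [::] | P i) F i x) = (fun _ => 1).
    by apply: funext => x; rewrite big_nil.
  exact: Sk_cst.
case Pa : (P a).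
  have -> : (fun x => \prod_(i <- a :: r | P i) F i x) =
            (fun x => F a x * \prod_(i <- r | P i) F i x).
    by apply: funext => x; rewrite big_cons Pa.
  exact: Sk_mul (HF a Pa) IH.
have -> : (fun x => \prod_(i <- a :: r | P i) F i x) = (fun x => \prod_(i <- r | P i) F i x).
  by apply: funext => x; rewrite big_cons Pa.
exact: IH.
Qed.

Lemma Sk_det W k p (A : 'rV[R]_N -> 'M[R]_p) : open W ->
  (forall a b, Sk W k (fun x => A x a b)) -> Sk W k (fun x => \det (A x)).
Proof.
move=> oW HA; rewrite /determinant.
apply: Sk_sum => // s _; apply: Sk_mul => //; first exact: Sk_cst.
by apply: Sk_prod => // i _; exact: HA.
Qed.

End Smooth.

Section Conv.
Local Open Scope classical_set_scope.
Context {R : realType}.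

Lemma mx_cvg_entries {T : Type} (F : set_system T) {FF : Filter F} m n
  (f : T -> 'M[R]_(m, n)) (L : 'M[R]_(m, n)) :
  (forall i j, (fun y => f y i j) @ F --> L i j) -> f @ F --> L.
Proof.
move=> H; apply/cvgrPdist_le => /= e e0.
near=> x.
rewrite /Num.Def.normr/= mx_normrE (bigmax_le _ (ltW e0))//= => i _.
rewrite !mxE/=.
move: i; near: x; apply: filter_forall => /= i.
exact: ((cvgrPdist_le _ _).1 (H i.1 i.2)).
Unshelve. all: by end_near.
Qed.

Lemma cont_entries N m n (f : 'rV[R]_N -> 'M[R]_(m, n)) x :
  (forall i j, {for x, continuous (fun y => f y i j)}) -> {for x, continuous f}.
Proof. by move=> H; apply: (mx_cvg_entries (FF := nbhs_filter x)) => i j; exact: H. Qed.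

Lemma pdiff_cons N m (i : 'I_N) s (F : 'rV[R]_N -> 'rV[R]_m) :
  pdiff (i :: s) F = (fun x => 'D_('e_i) (pdiff s F) x).
Proof. by []. Qed.

Lemma smooth_Sm N m (W : set 'rV[R]_N) (F : 'rV[R]_N -> 'rV[R]_m) (j : 'I_m) :
  open W -> smooth_on W F -> Sm W (fun x => F x ord0 j).
Proof.
move=> oW sF k.
suff H : forall s, Sk W k (fun x => pdiff s F x ord0 j) by exact: (H [::]).
elim: k => [|k IH] s /=.
  split => // x Wx; have [c _] := sF s x Wx.
  exact: (continuous_comp c (@coord_continuous R 1 m ord0 j _)).
split.
  move=> x Wx; have [c _] := sF s x Wx.
  exact: (continuous_comp c (@coord_continuous R 1 m ord0 j _)).
move=> i; split.
  by move=> x Wx; have [_ d] := sF s x Wx; exact: ((derivable_mxP _ _ _).1 (d i) ord0 j).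
apply: (Sk_loc (f := fun x => pdiff (i :: s) F x ord0 j)) => //.
move=> x Wx; have [_ d] := sF s x Wx.
by rewrite pdiff_cons /= (derive_mx (d i)) mxE.
Qed.

Definition pds N (s : seq 'I_N) (g : 'rV[R]_N -> R) := foldr (fun i g => Dp i g) g s.

Lemma Sm_pds N (W : set 'rV[R]_N) s g : Sm W g -> Sm W (pds s g).
Proof.
elim: s => [//|i s IH] Hg k /=.
exact: Sk_der (IH Hg k.+1).
Qed.

Lemma Sm_smooth N m (W : set 'rV[R]_N) (F : 'rV[R]_N -> 'rV[R]_m) :
  open W -> (forall j, Sm W (fun x => F x ord0 j)) -> smooth_on W F.
Proof.
move=> oW H.
have key : forall s, (forall x, W x -> forall j, pdiff s F x ord0 j = pds s (fun y => F y ord0 j) x)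
   /\ (forall x i, W x -> derivable (pdiff s F) x 'e_i).
  elim => [|i s [IHe IHd]].
    split; first by [].
    move=> x i Wx; apply/derivable_mxP => a b; rewrite (ord1 a).
    exact: Sk_derivable (H b 1%N) Wx.
  have E : forall x, W x -> forall j, pdiff (i :: s) F x ord0 j = pds (i :: s) (fun y => F y ord0 j) x.
    move=> x Wx j; rewrite pdiff_cons (derive_mx (IHd x i Wx)) mxE /= /Dp.
    apply: near_eq_derive; near=> y; apply: IHe; near: y; exact: open_near.
  split => // x i' Wx; apply/derivable_mxP => a b; rewrite (ord1 a).
  apply: (near_eq_derivable (f := pds (i :: s) (fun y => F y ord0 b))).
    near=> y; rewrite E //; near: y; exact: open_near.
  exact: Sk_derivable (Sm_pds (i :: s) (H b) 1%N) Wx.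
move=> s x Wx; have [E D] := key s; split; last by move=> i; exact: D.
apply: cont_entries => a b; rewrite (ord1 a).
apply: (cont_near (f := pds s (fun y => F y ord0 b))).
  near=> y; rewrite E //; near: y; exact: open_near.
have := @Sk_cont _ _ W 0%N (pds s (fun y => F y ord0 b)) (Sm_pds s (H b) 0%N) x Wx. by [].
Unshelve. all: by end_near.
Qed.

Definition rsel N N' (rho : 'I_N' -> 'I_N) (x : 'rV[R]_N) : 'rV[R]_N' :=
  \row_a x ord0 (rho a).

Lemma rsel_lin N N' (rho : 'I_N' -> 'I_N) (h : R) v x :
  rsel rho (h *: v + x) = h *: rsel rho v + rsel rho x.
Proof. by apply/rowP => a; rewrite !mxE. Qed.

Lemma rsel_cont N N' (rho : 'I_N' -> 'I_N) : continuous (rsel rho).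
Proof.
move=> x; apply: cont_entries => a b; rewrite /rsel.
have -> : (fun y : 'rV[R]_N => (\row_a0 y ord0 (rho a0)) a b) = (fun y => y ord0 (rho b)).
  by apply: funext => y; rewrite mxE.
exact: coord_continuous.
Qed.

Lemma quot_rsel N N' (rho : 'I_N' -> 'I_N) (g : 'rV[R]_N' -> R) x v :
  (fun h : R => h^-1 *: (((g \o rsel rho) \o shift x) (h *: v) - (g \o rsel rho) x)) =
  (fun h : R => h^-1 *: ((g \o shift (rsel rho x)) (h *: rsel rho v) - g (rsel rho x))).
Proof. by apply: funext => h; rewrite /= rsel_lin. Qed.

Lemma derive_rsel N N' (rho : 'I_N' -> 'I_N) (g : 'rV[R]_N' -> R) x v :
  'D_v (g \o rsel rho) x = 'D_(rsel rho v) g (rsel rho x).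
Proof. by rewrite /derive quot_rsel. Qed.

Lemma derivable_rsel N N' (rho : 'I_N' -> 'I_N) (g : 'rV[R]_N' -> R) x v :
  derivable g (rsel rho x) (rsel rho v) -> derivable (g \o rsel rho) x v.
Proof. by rewrite /derivable quot_rsel. Qed.

Lemma rsel_e N N' (rho : 'I_N' -> 'I_N) (i : 'I_N) : injective rho ->
  (exists2 a, rho a = i & rsel rho 'e_i = 'e_a) \/ rsel rho 'e_i = 0.
Proof.
move=> inj; case: (pickP (fun a => rho a == i)) => [a /eqP rai|none].
  left; exists a => //; apply/rowP => b; rewrite !mxE eqxx /=.
  by rewrite -rai (inj_eq inj).
right; apply/rowP => b; rewrite !mxE eqxx /= none.
by [].
Qed.

Lemma Sk_rsel N N' (rho : 'I_N' -> 'I_N) (W : set 'rV[R]_N') k (g : 'rV[R]_N' -> R) :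
  injective rho -> Sk W k g -> Sk (rsel rho @^-1` W) k (g \o rsel rho).
Proof.
move=> inj; elim: k g => [|k IH] g /= [cg Hg].
  split => // x Wx; exact: (@continuous_comp _ _ _ (rsel rho) g x (@rsel_cont N N' rho x) (cg _ Wx)).
split; first by move=> x Wx; exact: (@continuous_comp _ _ _ (rsel rho) g x (@rsel_cont N N' rho x) (cg _ Wx)).
move=> i; case: (rsel_e i inj) => [[a _ Ea]|E0].
  have [dg Hg'] := Hg a; split.
    by move=> x Wx; apply: derivable_rsel; rewrite Ea; exact: dg.
  have -> : Dp i (g \o rsel rho) = (Dp a g) \o rsel rho.
    by apply: funext => x; rewrite /Dp /= derive_rsel Ea.
  exact: IH.
split.
  by move=> x Wx; apply: derivable_rsel; rewrite E0; exact: derivable0.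
have -> : Dp i (g \o rsel rho) = (fun _ => 0).
  by apply: funext => x; rewrite /Dp /= derive_rsel E0 derive0.
exact: Sk_cst.
Qed.

End Conv.


Lemma big_prod_sum_dep (R : comRingType) D (l : 'I_D -> nat)
  (F : forall d : 'I_D, 'I_(l d) -> R) :
  \sum_(i : idx l) \prod_(d < D) F d (i d) = \prod_(d < D) \sum_(b : 'I_(l d)) F d b.
Proof.
pose T_ : 'I_D -> finType := fun d => 'I_(l d).
pose P_ := fun d : 'I_D => [ffun b : T_ d => F d b].
rewrite (reindex (@dffun_of_fprod _ T_)); last exact/onW_bij/dffun_of_fprod_bij.
under eq_bigr do under eq_bigr do rewrite ffunE.
transitivity (\sum_(t : fprod T_) \prod_(i in 'I_D) P_ i (t i)).
  by apply: eq_bigr => t _; apply: eq_bigr => i _; rewrite ffunE.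
rewrite (@big_fprod R 0 1 *%R +%R 'I_D T_ P_).
rewrite -(bigA_distr_big_dep (tagged_with T_) (fun i j => untag 0 (P_ i) j)).
apply: eq_bigr => d _.
rewrite [RHS](_ : _ = \sum_(b : T_ d) P_ d b); last by apply: eq_bigr => b _; rewrite ffunE.
rewrite (big_tag (fun d b => P_ d b) d).
by apply: eq_bigl.
Qed.



Section Upd.
Context {D : nat} {l : 'I_D -> nat}.

Lemma upd_same (k : idx l) d (i : 'I_(l d)) : upd k i d = i.
Proof. by rewrite /upd ffunE dfwithin. Qed.

Lemma upd_other (k : idx l) d (i : 'I_(l d)) e : d != e -> upd k i e = k e.
Proof. by move=> ne; rewrite /upd ffunE dfwithout. Qed.

Lemma upd_other2 (k : idx l) d (i : 'I_(l d)) e : e != d -> upd k i e = k e.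
Proof. by rewrite eq_sym; exact: upd_other. Qed.

Lemma idx_neq (i j : idx l) : i != j -> exists d, i d != j d.
Proof.
move=> ne; case: (pickP (fun d => i d != j d)) => [d nd|all]; first by exists d.
exfalso; move/eqP: ne; apply; apply/ffunP => d; apply/eqP; exact: (negbFE (all d)).
Qed.

End Upd.

Section Tuck.
Context {R : realType} {D : nat} {n l : 'I_D -> nat}.
Unset Implicit Arguments.
Variables (sg : forall d, 'I_(l d) -> 'I_(n d)) (tau : forall d, 'I_(l d) -> idx l).
Set Implicit Arguments.

Definition sig (k : idx l) : idx n := @finfun _ (fun d => 'I_(n d)) (fun d => sg d (k d)).

Lemma sigE k d : sig k d = sg d (k d).
Proof. by rewrite ffunE. Qed.

Lemma upd_sig (k : idx l) d (a : 'I_(l d)) : upd (sig k) (sg d a) = sig (upd k a).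
Proof.
apply/ffunP => e; case: (eqVneq d e) => [<-|ne].
  by rewrite sigE !upd_same.
by rewrite sigE !upd_other // sigE.
Qed.

Definition TK (T : tensor R n) : tensor R l := fun k => T (sig k).
Definition Bm (T : tensor R n) d : 'M[R]_(l d) :=
  \matrix_(a, j) T (sig (upd (tau d j) a)).
Definition Rm (T : tensor R n) d : 'M[R]_(n d, l d) :=
  \matrix_(r, j) T (upd (sig (tau d j)) r).
Definition Binv p (B : 'M[R]_p) : 'M[R]_p := (\det B)^-1 *: \adj B.
Definition Um (T : tensor R n) d : 'M[R]_(n d, l d) := Rm T d *m Binv (Bm T d).
Definition PT (T : tensor R n) : tensor R n := mlmul (Um T) (TK T).

Lemma Binv_r p (B : 'M[R]_p) : B \in unitmx -> B *m Binv B = 1%:M.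
Proof.
rewrite unitmxE unitfE => nz.
by rewrite /Binv -scalemxAr mul_mx_adj scale_scalar_mx mulVf.
Qed.

Lemma Binv_l p (B : 'M[R]_p) : B \in unitmx -> Binv B *m B = 1%:M.
Proof.
rewrite unitmxE unitfE => nz.
by rewrite /Binv -scalemxAl mul_adj_mx scale_scalar_mx mulVf.
Qed.

Lemma Um_sg T d a b : Bm T d \in unitmx -> Um T d (sg d a) b = (a == b)%:R.
Proof.
move=> u.
have -> : Um T d (sg d a) b = (Bm T d *m Binv (Bm T d)) a b.
  rewrite !mxE; apply: eq_bigr => j _; rewrite !mxE upd_sig //.
by rewrite Binv_r // mxE.
Qed.

Lemma UmBm T d : Bm T d \in unitmx -> Um T d *m Bm T d = Rm T d.
Proof. by move=> u; rewrite /Um -mulmxA Binv_l // mulmx1. Qed.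


Lemma sum_upd (f : idx l -> R) e (a : idx l) :
  \sum_i f i * \prod_(d | d != e) (a d == i d)%:R = \sum_(b : 'I_(l e)) f (upd a b).
Proof.
rewrite (partition_big (fun i : idx l => i e) xpredT) //=.
apply: eq_bigr => b _.
rewrite (bigD1 (upd a b)); last by rewrite upd_same eqxx.
rewrite /= [X in _ + X]big1 ?addr0.
  by rewrite big1 ?mulr1 // => d nde; rewrite upd_other2 // eqxx.
move=> i /andP[/eqP ie ne]; have [d nd] := idx_neq ne.
case: (eqVneq d e) => [dE|dne].
  by move: nd; rewrite dE ie upd_same eqxx.
move: nd; rewrite upd_other2 // => nd.
have nd2 : (a d == i d) = false by apply/negbTE; rewrite eq_sym.
by rewrite (bigD1 d) //= nd2 mul0r mulr0.
Qed.

Lemma PT_free_sig T a : (forall d, Bm T d \in unitmx) -> PT T (sig a) = T (sig a).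
Proof.
move=> u; rewrite /PT /mlmul.
transitivity (\sum_i TK T i * \prod_d (a d == i d)%:R).
  by apply: eq_bigr => i _; congr (_ * _); apply: eq_bigr => d _; rewrite sigE Um_sg.
rewrite (bigD1 a) //= [X in _ + X]big1 ?addr0.
  by rewrite big1 ?mulr1 // => d _; rewrite eqxx.
move=> i ne; have [d nd] := idx_neq ne.
by rewrite (bigD1 d) //= eq_sym (negbTE nd) mul0r mulr0.
Qed.

Lemma PT_free_upd T e j (r : 'I_(n e)) : (forall d, Bm T d \in unitmx) ->
  PT T (upd (sig (tau e j)) r) = T (upd (sig (tau e j)) r).
Proof.
move=> u; rewrite /PT /mlmul.
transitivity (\sum_i (TK T i * Um T e r (i e)) * \prod_(d | d != e) ((tau e j) d == i d)%:R).
  apply: eq_bigr => i _; rewrite -mulrA; congr (_ * _).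
  rewrite (bigD1 e) //= upd_same; congr (_ * _).
  by apply: eq_bigr => d nde; rewrite upd_other2 // sigE Um_sg.
rewrite (sum_upd (fun i => TK T i * Um T e r (i e))).
have := congr1 (fun M : 'M[R]_(n e, l e) => M r j) (UmBm (u e)); rewrite !mxE => <-.
by apply: eq_bigr => b _; rewrite upd_same [Bm T e b j]mxE mulrC.
Qed.

Definition isfree (k : idx n) : bool :=
  [exists a : idx l, k == sig a] ||
  [exists d : 'I_D, [exists j : 'I_(l d), [exists r : 'I_(n d), k == upd (sig (tau d j)) r]]].

Lemma PT_free T k : (forall d, Bm T d \in unitmx) -> isfree k -> PT T k = T k.
Proof.
move=> u /orP[/existsP[a /eqP ->]|/existsP[d /existsP[j /existsP[r /eqP ->]]]].
  exact: PT_free_sig.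
exact: PT_free_upd.
Qed.

Lemma PT_dep T T' : (forall k, isfree k -> T k = T' k) -> PT T = PT T'.
Proof.
move=> E.
have eTK : TK T = TK T'.
  by apply: funext => a; apply: E; apply/orP; left; apply/existsP; exists a.
have eB d : Bm T d = Bm T' d.
  apply/matrixP => a j; rewrite !mxE; apply: E; apply/orP; left.
  by apply/existsP; exists (upd (tau d j) a).
have eR d : Rm T d = Rm T' d.
  apply/matrixP => r j; rewrite !mxE; apply: E; apply/orP; right.
  by apply/existsP; exists d; apply/existsP; exists j; apply/existsP; exists r.
rewrite /PT /mlmul eTK; apply: funext => k; apply: eq_bigr => i _; congr (_ * _).
by apply: eq_bigr => d _; rewrite /Um eB eR.
Qed.

Lemma mlmul_ext (U U' : forall d, 'M[R]_(n d, l d)) (C : tensor R l) :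
  (forall d, U d = U' d) -> mlmul U C = mlmul U' C.
Proof.
move=> E; rewrite /mlmul; apply: funext => k; apply: eq_bigr => i _.
by congr (_ * _); apply: eq_bigr => d _; rewrite E.
Qed.

Lemma mlmul_comp (U : forall d, 'M[R]_(n d, l d)) (A : forall d, 'M[R]_(l d)) (C : tensor R l) :
  mlmul U (mlmul A C) = mlmul (fun d => U d *m A d) C.
Proof.
rewrite /mlmul; apply: funext => k.
under eq_bigr do rewrite mulr_suml.
rewrite exchange_big /=; apply: eq_bigr => j _.
transitivity (C j * \sum_(i : idx l) \prod_(d < D) (U d (k d) (i d) * A d (i d) (j d))).
  rewrite mulr_sumr; apply: eq_bigr => i _.
  rewrite big_split /= -mulrA; congr (_ * _); exact: mulrC.
congr (_ * _); rewrite (big_prod_sum_dep (fun d b => U d (k d) b * A d b (j d))).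
by apply: eq_bigr => d _; rewrite mxE.
Qed.

Lemma TK_mlmul (V : forall d, 'M[R]_(n d, l d)) C :
  TK (mlmul V C) = mlmul (fun d => rowsub (sg d) (V d)) C.
Proof.
apply: funext => k; rewrite /TK /mlmul; apply: eq_bigr => i _; congr (_ * _).
by apply: eq_bigr => d _; rewrite sigE mxE.
Qed.

Definition Xm (V : forall d, 'M[R]_(n d, l d)) (C : tensor R l) d : 'M[R]_(l d) :=
  \matrix_(b, j) \sum_(i : idx l | i d == b) C i * \prod_(e | e != d) V e (sg e (tau d j e)) (i e).

Lemma mulX V C d p (Y : 'M[R]_(p, l d)) r j :
  (Y *m Xm V C d) r j =
  \sum_(i : idx l) C i * (Y r (i d) * \prod_(e | e != d) V e (sg e (tau d j e)) (i e)).
Proof.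
rewrite mxE [RHS](partition_big (fun i : idx l => i d) xpredT) //=.
apply: eq_bigr => b _; rewrite mxE mulr_sumr.
by apply: eq_bigr => i /eqP <-; rewrite mulrCA.
Qed.

Lemma Bm_mlmul V C d : Bm (mlmul V C) d = rowsub (sg d) (V d) *m Xm V C d.
Proof.
apply/matrixP => a j; rewrite mulX mxE /mlmul; apply: eq_bigr => i _; congr (_ * _).
rewrite (bigD1 d) //= sigE upd_same mxE; congr (_ * _).
by apply: eq_bigr => e ne; rewrite sigE upd_other2.
Qed.

Lemma Rm_mlmul V C d : Rm (mlmul V C) d = V d *m Xm V C d.
Proof.
apply/matrixP => r j; rewrite mulX mxE /mlmul; apply: eq_bigr => i _; congr (_ * _).
rewrite (bigD1 d) //= upd_same; congr (_ * _).
by apply: eq_bigr => e ne; rewrite upd_other2 // sigE.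
Qed.

Lemma PT_mlmul (V : forall d, 'M[R]_(n d, l d)) (C : tensor R l) : (forall d, Bm (mlmul V C) d \in unitmx) ->
  PT (mlmul V C) = mlmul V C.
Proof.
move=> u.
have eU d : Um (mlmul V C) d *m rowsub (sg d) (V d) = V d.
  have := u d; rewrite Bm_mlmul unitmx_mul => /andP[uA uX].
  have := UmBm (u d); rewrite Bm_mlmul Rm_mlmul mulmxA => h.
  by rewrite -[LHS](mulmxK uX) h mulmxK.
rewrite /PT TK_mlmul mlmul_comp; apply: mlmul_ext => d; exact: eU.
Qed.

Lemma rank_Um T d : Bm T d \in unitmx -> \rank (Um T d) = l d.
Proof.
move=> u; apply/eqP; rewrite eqn_leq rank_leq_col /=.
have h : rowsub (sg d) (Um T d) = 1%:M by apply/matrixP => a b; rewrite [LHS]mxE Um_sg // mxE.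
by have := mxrankM_maxr (rowsub (sg d) 1%:M) (Um T d); rewrite -rowsubE h mxrank1.
Qed.

End Tuck.


Lemma split_l m n (b : 'I_m) : fintype.split (lshift n b) = inl b.
Proof. exact: (@unsplitK m n (inl b)). Qed.
Lemma split_r m n (b : 'I_n) : fintype.split (rshift m b) = inr b.
Proof. exact: (@unsplitK m n (inr b)). Qed.

Section Main.
Local Open Scope classical_set_scope.
Unset Implicit Arguments.
Variables (R : realType) (D : nat) (n l : 'I_D -> nat) (M : set (tensor R l)).
Variables (sg : forall d, 'I_(l d) -> 'I_(n d)) (tau : forall d, 'I_(l d) -> idx l).
Hypothesis sg_inj : forall d, injective (sg d).
Variables (cM : nat) (UM : set 'rV[R]_#|idx l|) (FM : 'rV[R]_#|idx l| -> 'rV[R]_cM).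
Hypotheses (oUM : open UM) (sFM : smooth_on UM FM).
Hypothesis Minv : forall (A : forall d, 'M[R]_(l d)) C,
  (forall d, A d \in unitmx) -> M C -> M (mlmul A C).
Hypothesis eqFM : forall x, UM x -> (M (fun k => x ord0 (enum_rank k)) <-> FM x = 0).
Hypothesis rkFM : forall x, UM x -> \rank (Defs.jacobian FM x) = cM.
Set Implicit Arguments.

Local Notation Nn := #|idx n|.
Local Notation Nl := #|idx l|.

Definition tn (x : 'rV[R]_Nn) : tensor R n := fun k => x ord0 (enum_rank k).
Definition rho (a : 'I_Nl) : 'I_Nn := enum_rank (sig sg (enum_val a)).
Definition pim (x : 'rV[R]_Nn) : 'rV[R]_Nl := rsel rho x.
Definition hdet (x : 'rV[R]_Nn) : R := \prod_(d < D) \det (Bm sg tau (tn x) d).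
Definition Uo : set 'rV[R]_Nn := (pim @^-1` UM) `&` (hdet @^-1` [set r | r != 0]).
Definition Dep : {set 'I_Nn} := [set i | ~~ isfree sg tau (enum_val i)].
Local Notation m := #|Dep|.
Definition depi (q : 'I_m) : 'I_Nn := enum_val q.
Definition Qf (q : 'I_m) (x : 'rV[R]_Nn) : R :=
  x ord0 (depi q) - PT sg tau (tn x) (enum_val (depi q)).
Definition gcomp (j : 'I_(cM + m)) (x : 'rV[R]_Nn) : R :=
  match fintype.split j with inl a => FM (pim x) ord0 a | inr q => Qf q x end.
Definition G (x : 'rV[R]_Nn) : 'rV[R]_(cM + m) := \row_j gcomp j x.

Lemma sig_inj : injective (sig sg).
Proof.
move=> a b /ffunP E; apply/ffunP => d; apply: (sg_inj d).
by have := E d; rewrite !sigE.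
Qed.

Lemma rho_inj : injective rho.
Proof. by move=> a b /enum_rank_inj /sig_inj /enum_val_inj. Qed.

Lemma pim_tn x : (fun k => pim x ord0 (enum_rank k)) = TK sg (tn x).
Proof. by apply: funext => k; rewrite /pim /rsel mxE /rho enum_rankK. Qed.

Lemma Sk_tn W k (kk : idx n) : Sk W k (fun x => tn x kk).
Proof. exact: Sk_coord. Qed.

Lemma Sk_Bm W k d a b : Sk W k (fun x => Bm sg tau (tn x) d a b).
Proof.
have -> : (fun x => Bm sg tau (tn x) d a b) = (fun x => tn x (sig sg (upd (tau d b) a))).
  by apply: funext => x; rewrite mxE.
exact: Sk_tn.
Qed.

Lemma Sk_hdet W k : open W -> Sk W k hdet.
Proof.
move=> oW; rewrite /hdet.
apply: (@Sk_prod _ _ W k _ (index_enum _) xpredT (fun d x => \det (Bm sg tau (tn x) d))) => // d _.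
by apply: Sk_det => // a b; exact: Sk_Bm.
Qed.

Lemma open_Uo : open Uo.
Proof.
apply: openI.
  by apply: open_comp => // x _; exact: rsel_cont.
apply: open_comp; last exact: open_neq.
by move=> x _; exact: (Sk_cont (Sk_hdet 0%N openT) (I : setT x)).
Qed.


Lemma Uo_det x d : Uo x -> \det (Bm sg tau (tn x) d) != 0.
Proof. by case=> _ /= /prodf_neq0 H; exact: H. Qed.

Lemma Uo_unit x d : Uo x -> Bm sg tau (tn x) d \in unitmx.
Proof. by move=> U; rewrite unitmxE unitfE; exact: Uo_det. Qed.

Lemma Sk_adj W k p (A : 'rV[R]_Nn -> 'M[R]_p) i j : open W ->
  (forall a b, Sk W k (fun x => A x a b)) -> Sk W k (fun x => \adj (A x) i j).
Proof.
move=> oW HA.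
have -> : (fun x => \adj (A x) i j) =
   (fun x => (-1) ^+ (j + i) * \det (row' j (col' i (A x)))).
  by apply: funext => x; rewrite mxE.
apply: Sk_mul => //; first exact: Sk_cst.
apply: Sk_det => // a b.
have -> : (fun x => row' j (col' i (A x)) a b) = (fun x => A x (lift j a) (lift i b)).
  by apply: funext => x; rewrite !mxE.
exact: HA.
Qed.

Lemma Sk_Um k d r b : Sk Uo k (fun x => Um sg tau (tn x) d r b).
Proof.
have oU := open_Uo.
have -> : (fun x => Um sg tau (tn x) d r b) = (fun x => \sum_j
     Rm sg tau (tn x) d r j * ((\det (Bm sg tau (tn x) d))^-1 * \adj (Bm sg tau (tn x) d) j b)).
  by apply: funext => x; rewrite mxE; apply: eq_bigr => j _; rewrite [Binv _ _ _]mxE.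
apply: Sk_sum => // j _; apply: Sk_mul => //.
  have -> : (fun x => Rm sg tau (tn x) d r j) = (fun x => tn x (upd (sig sg (tau d j)) r)).
    by apply: funext => x; rewrite mxE.
  exact: Sk_tn.
apply: Sk_mul => //.
  apply: Sk_inv => //; first by move=> x Ux; exact: Uo_det.
  by apply: Sk_det => // a c; exact: Sk_Bm.
by apply: Sk_adj => // a c; exact: Sk_Bm.
Qed.

Lemma Sk_PT k kk : Sk Uo k (fun x => PT sg tau (tn x) kk).
Proof.
have oU := open_Uo.
rewrite /PT /mlmul.
apply: (@Sk_sum _ _ Uo k _ (index_enum _) xpredT
   (fun i x => TK sg (tn x) i * \prod_(d < D) Um sg tau (tn x) d (kk d) (i d))) => // i _.
apply: Sk_mul => //; first exact: Sk_tn.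
apply: (@Sk_prod _ _ Uo k _ (index_enum _) xpredT
   (fun d x => Um sg tau (tn x) d (kk d) (i d))) => // d _.
exact: Sk_Um.
Qed.

Lemma Sk_Qf k q : Sk Uo k (Qf q).
Proof.
have oU := open_Uo.
apply: Sk_add => //; first exact: Sk_coord.
by apply: Sk_opp => //; exact: Sk_PT.
Qed.

Lemma Sk_gcomp k j : Sk Uo k (gcomp j).
Proof.
rewrite /gcomp; case: (fintype.split j) => [a|q]; last exact: Sk_Qf.
have H := Sk_rsel rho_inj (smooth_Sm a oUM sFM k).
by apply: (Sk_subset _ H) => x [].
Qed.

Lemma smooth_G : smooth_on Uo G.
Proof.
apply: Sm_smooth; first exact: open_Uo.
move=> j k.
have -> : (fun x => G x ord0 j) = gcomp j by apply: funext => x; rewrite mxE.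
exact: Sk_gcomp.
Qed.


Lemma free_notDep k (q : 'I_m) : isfree sg tau k -> enum_rank k != depi q.
Proof.
move=> fr; apply/eqP => E; have := enum_valP q; rewrite -/(depi q) inE -E enum_rankK.
by rewrite fr.
Qed.

Lemma Qf0 x : Uo x -> (forall q, Qf q x = 0) <-> (forall k, tn x k = PT sg tau (tn x) k).
Proof.
move=> Ux; split.
  move=> Q0 k; case fr : (isfree sg tau k).
    by rewrite PT_free // => d; exact: Uo_unit.
  have Hi : enum_rank k \in Dep by rewrite inE enum_rankK fr.
  have := Q0 (enum_rank_in Hi (enum_rank k)).
  rewrite /Qf /depi enum_rankK_in // enum_rankK => /eqP; rewrite subr_eq0 => /eqP.
  by rewrite /tn.
move=> E q; rewrite /Qf -E /tn enum_valK; exact: subrr.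
Qed.

Lemma G0 x : G x = 0 <-> (FM (pim x) = 0 /\ forall q, Qf q x = 0).
Proof.
split.
  move=> /rowP E; split.
    apply/rowP => b; have := E (lshift m b); rewrite !mxE /gcomp split_l => ->.
    by [].
  by move=> q; have := E (rshift cM q); rewrite !mxE /gcomp split_r.
move=> [F0 Q0]; apply/rowP => j; rewrite !mxE /gcomp.
by case: (fintype.split j) => [b|q]; [rewrite F0 mxE | exact: Q0].
Qed.

Lemma iff_G x : Uo x -> (tucker_set M (tn x) <-> G x = 0).
Proof.
move=> Ux; have [UMx _] := Ux.
have FMiff : M (TK sg (tn x)) <-> FM (pim x) = 0.
  by rewrite -pim_tn; exact: eqFM.
rewrite G0 -FMiff (Qf0 Ux); split.
  move=> [C [V [MC rV E]]].
  have u d := Uo_unit d Ux.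
  have u' d : Bm sg tau (mlmul V C) d \in unitmx by rewrite -E; exact: u.
  split.
    rewrite E TK_mlmul; apply: Minv => // d.
    by have := u' d; rewrite Bm_mlmul unitmx_mul => /andP[].
  by move=> k; rewrite E PT_mlmul.
move=> [MT E]; exists (TK sg (tn x)), (Um sg tau (tn x)); split => //.
  by move=> d; apply: rank_Um; exact: Uo_unit.
by apply: funext => k; exact: E.
Qed.


Lemma rsel_rho_e a : rsel rho ('e_(rho a) : 'rV[R]_Nn) = 'e_a.
Proof. by apply/rowP => c; rewrite !mxE (inj_eq rho_inj). Qed.

Lemma rsel_dep_e q : rsel rho ('e_(depi q) : 'rV[R]_Nn) = 0.
Proof.
apply/rowP => c; rewrite !mxE.
have fr : isfree sg tau (sig sg (enum_val c)).
  by apply/orP; left; apply/existsP; exists (enum_val c).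
by have := free_notDep q fr; rewrite -/(rho c) => /negbTE ->.
Qed.

Lemma Qf_lin q q' x (h : R) :
  Qf q (h *: 'e_(depi q') + x) = Qf q x + h * (q == q')%:R.
Proof.
rewrite /Qf.
have -> : PT sg tau (tn (h *: 'e_(depi q') + x)) = PT sg tau (tn x).
  apply: PT_dep => k fr; rewrite /tn !mxE.
  by rewrite (negbTE (free_notDep q' fr)) andbF mulr0 add0r.
rewrite !mxE eqxx /= (inj_eq enum_val_inj).
by rewrite addrC -!addrA; congr (_ + _); rewrite addrC.
Qed.

Lemma rank_G x : Uo x -> \rank (Defs.jacobian G x) = (cM + m)%N.
Proof.
move=> Ux; have [UMx _] := Ux.
have dG i : derivable G x 'e_i := (smooth_G [::] Ux).2 i.
have Jij i j : Defs.jacobian G x i j = 'D_('e_i) (gcomp j) x.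
  rewrite mxE (derive_mx (dG i)) mxE.
  by have -> : (fun t => G t ord0 j) = gcomp j by apply: funext => t; rewrite mxE.
have F1 a b : Defs.jacobian G x (rho a) (lshift m b) = Defs.jacobian FM (pim x) a b.
  rewrite Jij.
  have -> : gcomp (lshift m b) = (fun y => FM y ord0 b) \o rsel rho.
    by apply: funext => y; rewrite /gcomp split_l.
  rewrite derive_rsel rsel_rho_e mxE.
  have dF : derivable FM (pim x) 'e_a := (sFM [::] _ UMx).2 a.
  by rewrite (derive_mx dF) mxE.
have F2 q b : Defs.jacobian G x (depi q) (lshift m b) = 0.
  rewrite Jij.
  have -> : gcomp (lshift m b) = (fun y => FM y ord0 b) \o rsel rho.
    by apply: funext => y; rewrite /gcomp split_l.
  by rewrite derive_rsel rsel_dep_e derive0.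
have F3 q' q : Defs.jacobian G x (depi q') (rshift cM q) = (q == q')%:R.
  rewrite Jij.
  have -> : gcomp (rshift cM q) = Qf q by apply: funext => y; rewrite /gcomp split_r.
  exact: (derive_lin (Qf_lin q q' x)).2.
set J := Defs.jacobian G x.
set JF := Defs.jacobian FM (pim x).
set P1 := rowsub rho J.
set P2 := rowsub depi J.
set X := rsubmx P1.
have eP2 : P2 = row_mx 0 1%:M.
  apply/matrixP => q j; rewrite mxE -[j]splitK.
  case: (fintype.split j) => [b|q'] /=.
    by rewrite row_mxEl F2 mxE.
  by rewrite row_mxEr F3 mxE eq_sym.
have eL : lsubmx P1 = JF.
  by apply/matrixP => a b; rewrite /P1 /J [lsubmx _ _ _]mxE [rowsub _ _ _ _]mxE F1.
have eK : col_mx (P1 - X *m P2) P2 = block_mx JF 0 0 1%:M.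
  rewrite block_mxEv eP2; congr col_mx.
  rewrite mul_mx_row mulmx0 mulmx1 -[P1]hsubmxK eL -/X.
  rewrite opp_row_mx add_row_mx subr0.
  by rewrite subrr.
have eK2 : col_mx (P1 - X *m P2) P2 =
   col_mx (rowsub rho 1%:M - X *m rowsub depi 1%:M) (rowsub depi 1%:M) *m J.
  by rewrite mul_col_mx mulmxBl -mulmxA -!rowsubE.
apply/eqP; rewrite eqn_leq rank_leq_col /=.
have := mxrankM_maxr (col_mx (rowsub rho 1%:M - X *m rowsub depi 1%:M) (rowsub depi 1%:M)) J.
by rewrite -eK2 eK rank_diag_block_mx mxrank1 rkFM.
Qed.

End Main.

Unset Implicit Arguments. Set Strict Implicit. Set Printing Implicit Defensive.

Theorem proposition2p3 (R : realType) (D : nat) (n l : 'I_D -> nat)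
  (M : set (tensor R l)) :
  (0 < D)%N ->
  (forall d, (0 < l d)%N) ->
  (forall d, (l d <= n d)%N) ->
  tucker_core_structure M ->
  is_submanifold_t (@tucker_set R D n l M).
Proof.
move=> _ _ _ [Mman Mrank Minv] p Sp.
have [C0 [V0 [MC0 rV0 E0]]] := Sp.
have rf d : row_full (V0 d) by rewrite /row_full rV0.
pose sg d (a : 'I_(l d)) : 'I_(n d) := fullrankfun (rf d) a.
have sg_inj d : injective (sg d) := @fullrankfun_inj _ _ _ _ (rf d).
pose A0 d := rowsub (sg d) (V0 d).
have uA0 d : A0 d \in unitmx := fullrowsub_unit (rf d).
set T0 := (fun k => p ord0 (enum_rank k)) in E0.
have eTK : TK sg T0 = mlmul A0 C0 by rewrite E0 TK_mlmul.
have MTK : M (TK sg T0) by rewrite eTK; apply: Minv.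
have rk := Mrank _ MTK.
have rfu d : row_full (unfolding (TK sg T0) d)^T by rewrite /row_full mxrank_tr rk.
pose tau d (j : 'I_(l d)) : idx l := enum_val (fullrankfun (rfu d) j).
have uB d : Bm sg tau T0 d \in unitmx.
  have -> : Bm sg tau T0 d = (rowsub (fullrankfun (rfu d)) (unfolding (TK sg T0) d)^T)^T.
    by apply/matrixP => a j; rewrite !mxE.
  by rewrite unitmx_tr; exact: fullrowsub_unit.
have Mp : M (fun k => pim sg p ord0 (enum_rank k)) by rewrite pim_tn.
have [cM [UM [FM [oUM UMp sFM rkFM eqFM]]]] := Mman _ Mp.
exists (cM + #|Dep sg tau|)%N, (Uo sg tau UM), (G sg tau FM); split.
- exact: open_Uo.
- split => //=; apply/prodf_neq0 => d _.
  by have := uB d; rewrite unitmxE unitfE.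
- exact: smooth_G.
- by move=> x Ux; exact: (rank_G sg_inj oUM sFM rkFM Ux).
- by move=> x Ux; exact: (iff_G Minv eqFM Ux).
Qed.
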